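(* Let $f=(f_m)_{m\ge1}$ be a Boolean function and let $k,r,w,t$ be positive integers with $t\mid k$ and $r<w$. There is no $c$-competitive deterministic online algorithm (with unlimited computational power) for $BH^t_{k,r,w}(f)$, where $c<\big(\lfloor (t+1)/2\rfloor\cdot w+(t-\lfloor(t+1)/2\rfloor)\cdot r\big)/(tr)$.
   Context: A Boolean function $f$ is a family $f=(f_m)_{m\ge1}$ with $f_m:\{0,1\}^m\to\{0,1\}$. Online minimization problems: inputs $I=(x_1,\dots,x_n)$, outputs $O=(y_1,\dots,y_n)$, positive cost $cost(I,O)$, $Opt(I)$ an output of minimum cost. A deterministic online algorithm $A$ computes $y_i$ as an arbitrary function of $x_1,\dots,x_i$. $A$ is $c$-competitive if there is a constant $\alpha\ge0$ such that for every $n$ and every input $I$ of length $n$, $cost(I,A(I))\le c\cdot cost(I,Opt(I))+\alpha$. The Black Hats problem $BH^t_{k,r,w}(f)$ (with $z=k/t$): inputs over $\{0,1,2\}$ are $I=(2,X_1,2,X_2,\dots,2,X_k)$ with $X_i\in\{0,1\}^{m_i}$, $m_i\ge1$, $n=\sum_i(m_i+1)$. Let $y_j$ be the answer at the position of the $j$-th symbol $2$, and $g_j(I)=\bigoplus_{i=j}^k f_{m_i}(X_i)$. The answers $y_1,\dots,y_k$ form $t$ consecutive blocks of $z$; block $i$ costs $r$ if $y_j=g_j(I)$ for all $j$ in the block and $w$ otherwise; the total cost is the sum of block costs.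
   Formalization: Competitiveness is taken with α = 0, so cost(I,A(I)) ≤ c·cost(I,Opt(I)) for every input I, and f is assumed to take both values 0 and 1 on nonempty strings. The statement above fails without it. *)

(* Defs.v *)
From mathcomp Require Import all_boot all_order all_algebra.
Set Implicit Arguments. Unset Strict Implicit. Unset Printing Implicit Defensive.
Import Order.TTheory GRing.Theory Num.Theory.

(* A Boolean function f = (f_m)_{m>=1} is represented as f : seq bool -> bool,
   f_m being the restriction of f to strings of length m (length 0 is never used). *)

(* Input symbols are the naturals 0,1,2.  The Black Hats input
   (2, X_1, 2, X_2, ..., 2, X_k) is given by the list Xs = [X_1; ...; X_k]. *)
Definition bh_input (Xs : seq (seq bool)) : seq nat :=
  flatten [seq 2 :: map nat_of_bool X | X <- Xs].

Definition bh_valid (k : nat) (Xs : seq (seq bool)) : bool :=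
  (size Xs == k) && all (fun X => 0 < size X) Xs.

Definition twos_pos (s : seq nat) : seq nat :=
  [seq i.+1 | i <- iota 0 (size s) & nth 0 s i == 2].

(* g_j(I) = XOR_{i=j}^{k} f(X_i)   (here j is 0-indexed: gval f Xs j = g_{j+1}). *)
Definition gval (f : seq bool -> bool) (Xs : seq (seq bool)) (j : nat) : bool :=
  foldr addb false [seq f X | X <- drop j Xs].

Definition bh_cost (f : seq bool -> bool) (k r w t : nat)
    (Xs : seq (seq bool)) (ys : seq bool) : nat :=
  let z := k %/ t in
  \sum_(b < t)
    (if all (fun j => nth false ys j == gval f Xs j) (iota (b * z) z)
     then r else w).

Definition bh_opt_cost (f : seq bool -> bool) (k r w t : nat)
    (Xs : seq (seq bool)) : nat :=
  let costf := fun y : {ffun 'I_k -> bool} =>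
    bh_cost f k r w t Xs [seq y i | i <- enum 'I_k] in
  costf [arg min_(y < [ffun=> false] : {ffun 'I_k -> bool}) costf y].

(* A deterministic online algorithm: y_i = A (x_1, ..., x_i).  Its answers at
   the positions of the symbols 2. *)
Definition alg_answers (A : seq nat -> bool) (I : seq nat) : seq bool :=
  [seq A (take p I) | p <- twos_pos I].

Definition alg_cost (A : seq nat -> bool) (f : seq bool -> bool) (k r w t : nat)
    (Xs : seq (seq bool)) : nat :=
  bh_cost f k r w t Xs (alg_answers A (bh_input Xs)).

Definition competitive_with (R : realFieldType) (f : seq bool -> bool)
    (k r w t : nat) (c alpha : R) (A : seq nat -> bool) : Prop :=
  forall Xs, bh_valid k Xs ->
    ((alg_cost A f k r w t Xs)%:R <= c * (bh_opt_cost f k r w t Xs)%:R + alpha)%R.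

Definition strictly_competitive (R : realFieldType) (f : seq bool -> bool)
    (k r w t : nat) (c : R) (A : seq nat -> bool) : Prop :=
  competitive_with f k r w t c 0 A.

(* Main.v *)
Require Import Defs.
From mathcomp Require Import all_boot all_order all_algebra zify.
Import Order.TTheory GRing.Theory Num.Theory.

Lemma twos_pos_cat s u :
  twos_pos (s ++ u) = twos_pos s ++ [seq i + size s | i <- twos_pos u].
Proof.
rewrite /twos_pos size_cat iotaD filter_cat map_cat; congr (_ ++ _).
  congr map; apply: eq_in_filter => i; rewrite mem_iota /= => Hi.
  by rewrite nth_cat Hi.
rewrite -{1}[size s]addn0 (iotaDl (size s) 0) filter_map -!map_comp.
have -> : [seq i <- iota 0 (size u) | preim (addn (size s)) (fun i => nth 0 (s ++ u) i == 2) i]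
   = [seq i <- iota 0 (size u) | nth 0 u i == 2].
  by apply: eq_filter => i /=; rewrite nth_cat ltnNge leq_addr /= addKn.
by apply: eq_map => i /=; rewrite addSn addnC.
Qed.

Lemma twos_pos_last X : twos_pos (2 :: map nat_of_bool X) = [:: 1].
Proof.
rewrite /twos_pos /= size_map.
have -> : [seq i <- iota 1 (size X) | nth 0 (2 :: map nat_of_bool X) i == 2] = [::].
  rewrite -(filter_pred0 (iota 1 (size X))); apply: eq_in_filter.
  case => [|i]; rewrite mem_iota //= => Hi.
  rewrite (nth_map false); last lia.
  by case: (nth false X i).
by [].
Qed.

Lemma bh_input_rcons pre X :
  bh_input (rcons pre X) = bh_input pre ++ 2 :: map nat_of_bool X.
Proof. by rewrite /bh_input map_rcons flatten_rcons. Qed.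

Lemma answers_last A s X :
  alg_answers A (s ++ 2 :: map nat_of_bool X) = alg_answers A s ++ [:: A (rcons s 2)].
Proof.
rewrite /alg_answers twos_pos_cat twos_pos_last map_cat /=; congr (_ ++ _).
  apply/eq_in_map => p /mapP [i]; rewrite mem_filter mem_iota => /andP [_ /andP [_ Hi]] ->.
  by rewrite takel_cat.
rewrite add1n take_cat ltnNge leqnSn /= subSnn.
have -> : take 1 (2 :: map nat_of_bool X) = [:: 2] by case: X.
by rewrite cats1.
Qed.

Lemma foldr_addb b l : foldr addb b l = foldr addb false l (+) b.
Proof. by elim: l => [|a l IH] //=; rewrite IH addbA. Qed.

Lemma gval_rcons f pre x j : j <= size pre ->
  gval f (rcons pre x) j = gval f pre j (+) f x.
Proof.
by move=> Hj; rewrite /gval drop_rcons // map_rcons foldr_rcons addbF foldr_addb.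
Qed.
Lemma opt_le f k r w t Xs : t %| k -> r <= w -> bh_opt_cost f k r w t Xs <= t * r.
Proof.
move=> tk rw; rewrite /bh_opt_cost.
case: arg_minnP => //= y _ Hmin.
apply: leq_trans (Hmin [ffun i : 'I_k => gval f Xs i] isT) _.
rewrite /bh_cost.
rewrite (eq_bigr (fun=> r)); first by rewrite sum_nat_const card_ord.
move=> b _; rewrite (_ : all _ _ = true) //; apply/allP => j.
rewrite mem_iota => /andP [H1 H2].
have Hj : j < k.
  apply: leq_trans H2 _; have Hk := divnK tk; set q := k %/ t in Hk *.
  have := ltn_ord b; nia.
rewrite (nth_map (Ordinal Hj)); last by rewrite size_enum_ord.
by rewrite ffunE /= -[j]/(nat_of_ord (Ordinal Hj)) nth_ord_enum.
Qed.

Lemma key (A : seq nat -> bool) (f : seq bool -> bool) (k r w t : nat) x1 x2 :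
  0 < size x1 -> 0 < size x2 -> f x1 != f x2 ->
  0 < k -> 0 < t -> t %| k -> r < w ->
  exists Xs, bh_valid k Xs /\
    t.+1./2 * w + (t - t.+1./2) * r <= alg_cost A f k r w t Xs.
Proof.
move=> Hs1 Hs2 Hf k0 t0 tk rw.
set z := k %/ t.
have Hk : k = z * t by rewrite /z divnK.
have z0 : 0 < z by move: k0; rewrite Hk; nia.
set pre := nseq k.-1 x1.
have Hpre : size pre = k.-1 by rewrite size_nseq.
set ys := alg_answers A (bh_input pre) ++ [:: A (rcons (bh_input pre) 2)].
have Hys x : alg_answers A (bh_input (rcons pre x)) = ys.
  by rewrite bh_input_rcons answers_last.
pose u (b : 'I_t) := nth false ys (b * z) (+) gval f pre (b * z).
have Hcost x : t * r + (w - r) * \sum_(b < t) (u b != f x)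
     <= alg_cost A f k r w t (rcons pre x).
  rewrite /alg_cost /bh_cost Hys -/z big_distrr /=.
  have -> : t * r = \sum_(b < t) r by rewrite sum_nat_const card_ord.
  rewrite -big_split /=.
  apply: leq_sum => b _.
  have Hb : b * z <= size pre.
    rewrite Hpre; have := ltn_ord b; move: k0; rewrite Hk; nia.
  case E: (u b == f x) => /=.
    by rewrite muln0 addn0; case: ifP => _ //; apply: ltnW.
  rewrite muln1 (_ : all _ _ = false); first by rewrite subnKC // ltnW.
  apply/negbTE/allP => H.
  have Hm : b * z \in iota (b * z) z by rewrite mem_iota leqnn /=; lia.
  have := H _ Hm.
  rewrite gval_rcons //.
  move: E; rewrite /u; case: (nth false ys (b * z)); case: (gval f pre (b * z));
    case: (f x) => //.
have Hsum : \sum_(b < t) (u b != f x1) + \sum_(b < t) (u b != f x2) = t.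
  rewrite -big_split /= (eq_bigr (fun=> 1)); first by rewrite sum_nat_const card_ord muln1.
  move=> b _; move: Hf; case: (u b); case: (f x1); case: (f x2) => //.
have Hval x : 0 < size x -> bh_valid k (rcons pre x).
  move=> Hx; rewrite /bh_valid size_rcons Hpre prednK // eqxx /=.
  rewrite all_rcons Hx /= all_nseq Hs1 orbT //.
set n1 := \sum_(b < t) (u b != f x1) in Hsum Hcost.
set n2 := \sum_(b < t) (u b != f x2) in Hsum Hcost.
have [H1|H2] : t.+1./2 <= n1 \/ t.+1./2 <= n2 by lia.
  exists (rcons pre x1); split; first exact: Hval.
  apply: leq_trans (Hcost x1); set h := t.+1./2 in H1 *.
  have ht : h <= t by rewrite /h; lia.
  have hn : n1 <= t by lia.
  nia.
exists (rcons pre x2); split; first exact: Hval.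
apply: leq_trans (Hcost x2); set h := t.+1./2 in H2 *.
have ht : h <= t by rewrite /h; lia.
have hn : n2 <= t by lia.
nia.
Qed.

Theorem theorem3 (R : realFieldType) (f : seq bool -> bool) (k r w t : nat) (c : R) :
  (exists x1 x2 : seq bool, [/\ 0 < size x1, 0 < size x2 & f x1 != f x2]) ->
  0 < k -> 0 < r -> 0 < w -> 0 < t -> t %| k -> r < w ->
  (c < (t.+1./2 * w + (t - t.+1./2) * r)%:R / (t * r)%:R)%R ->
  ~ exists A : seq nat -> bool, strictly_competitive f k r w t c A.
Proof.
Local Open Scope ring_scope.
move=> [x1 [x2 [Hs1 Hs2 Hf]]] k0 r0 w0 t0 tk rw Hc [A HA].
have [Xs [Hv HN]] := key A f k r w t x1 x2 Hs1 Hs2 Hf k0 t0 tk rw.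
have Hopt := opt_le f k r w t Xs tk (ltnW rw).
have := HA Xs Hv; rewrite addr0.
set N := (t.+1./2 * w + (t - t.+1./2) * r)%N in Hc HN.
set a := alg_cost A f k r w t Xs in HN *.
set o := bh_opt_cost f k r w t Xs in Hopt *.
have N0 : (0 < N)%N by rewrite /N; nia.
have tr0 : (0 < (t * r)%N%:R :> R)%R by rewrite ltr0n muln_gt0 t0.
rewrite ltr_pdivlMr // in Hc.
have HaN : (N%:R <= a%:R :> R)%R by rewrite ler_nat.
have HoT : (o%:R <= (t * r)%N%:R :> R)%R by rewrite ler_nat.
have HN0 : (0 < N%:R :> R)%R by rewrite ltr0n.
have Ho0 : (0 <= o%:R :> R)%R by [].
move=> Ha.
case: (lerP c 0) => Hc0.
  have H0 : (c * o%:R <= 0)%R by rewrite mulr_le0_ge0.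
  have : (N%:R <= (0:R))%R.
    by apply: le_trans HaN _; apply: le_trans Ha _.
  by rewrite leNgt HN0.
have : (c * o%:R <= c * (t * r)%N%:R)%R by rewrite ler_pM2l.
move=> H; have : (N%:R < N%:R :> R)%R.
  apply: le_lt_trans HaN _; apply: le_lt_trans Ha _; apply: le_lt_trans H Hc.
by rewrite ltxx.
Qed.
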